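(* Let $q$ be a prime power, $h\ge 2$, and $m>\max\{q^{h-1},hq-1\}$. Let $f(X)=\sum_{i=0}^{h-1}f_iX^{q^i}$ and $g(X)=\sum_{i=0}^{h-1}g_iX^{q^i}$ be invertible $\mathbb F_q$-linearised polynomials over $\mathbb F_{q^h}$. If $(f,g)$ satisfies property $(Prop_m)$, then $|\{i: f_i=0\}|=|\{i:g_i=0\}|\ge 1$.
   Context: An $\mathbb F_q$-linearised polynomial over $\mathbb F_{q^h}$ is $\sum_{l=0}^{h-1}a_lX^{q^l}$ with $a_l\in\mathbb F_{q^h}$, viewed as a map of $\mathbb F_{q^h}$; invertible means bijective. Identities $\equiv$ mean equality as maps. Property $(Prop_m)$: $(f,g)$ satisfies it if there exist triples $(a_j,b_j,c_j)\in(\mathbb F_{q^h}^* )^3$, $1\le j\le m$, with $(a_1,b_1,c_1)=(1,1,1)$, such that $a_jf(b_jf^{-1}(X))\equiv g(c_jg^{-1}(X))$ for every $j$, and for all $i\ne j$: $a_i\ne a_j$, $b_i\ne b_j$, $c_i\ne c_j$. *)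

(* Defs.v *)
From HB Require Import structures.
From mathcomp Require Import all_boot all_order all_algebra all_field.
Set Implicit Arguments. Unset Strict Implicit. Unset Printing Implicit Defensive.
Import GRing.Theory.
Local Open Scope ring_scope.

Definition prime_power (q : nat) : Prop :=
  exists p k : nat, [/\ prime p, (0 < k)%N & q = (p ^ k)%N].

Definition linpoly (K : fieldType) (q h : nat) (a : 'I_h -> K) (x : K) : K :=
  \sum_(l < h) a l * x ^+ (q ^ l)%N.

(* Triples are indexed by j = 0, ..., m-1 (the paper's
   j = 1, ..., m), and the first triple is (1,1,1). *)
Definition Prop_m (K : fieldType) (m : nat) (F Finv G Ginv : K -> K) : Prop :=
  exists a b c : nat -> K,
    [/\ forall j, (j < m)%N -> [/\ a j != 0, b j != 0 & c j != 0],
        [/\ a 0%N = 1, b 0%N = 1 & c 0%N = 1],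
        forall j, (j < m)%N -> forall x, a j * F (b j * Finv x) = G (c j * Ginv x)
      & forall i j, (i < m)%N -> (j < m)%N -> i <> j ->
          [/\ a i != a j, b i != b j & c i != c j]].

(* Main.v *)
From HB Require Import structures.
From mathcomp Require Import all_boot all_order all_algebra all_field.
From mathcomp Require Import fingroup perm.
Require Import Defs.
From mathcomp Require Import ring.
Set Implicit Arguments. Unset Strict Implicit. Unset Printing Implicit Defensive.
Import GRing.Theory.
Local Open Scope ring_scope.

Section Lin.
Variable K : finFieldType.
Variables q n : nat.
Local Notation H := n.+2.
Hypothesis q_gt1 : (1 < q)%N.
Hypothesis frobD : forall i (x y : K), (x + y) ^+ (q ^ i) = x ^+ (q ^ i) + y ^+ (q ^ i).
Hypothesis frobH : forall x : K, x ^+ (q ^ H) = x.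
Hypothesis cardK : #|K| = (q ^ H)%N.

Definition lin (s : 'I_H -> K) (x : K) : K := \sum_(l < H) s l * x ^+ (q ^ l).

Lemma q_gt0 : (0 < q)%N. Proof. exact: ltnW. Qed.

Lemma frob_red (x : K) k : x ^+ (q ^ k) = x ^+ (q ^ (k %% H)).
Proof.
have P e : x ^+ ((q ^ H) ^ e) = x.
  elim: e => [|e IH]; first by rewrite expn0 expr1.
  by rewrite expnS exprM frobH IH.
by rewrite {1}(divn_eq k H) expnD (mulnC (k %/ H)%N) expnM exprM P.
Qed.

Lemma ordD_val (i j : 'I_H) : val (i + j)%R = ((i + j) %% H)%N.
Proof. by []. Qed.

Lemma frob_ord (x : K) (i j : 'I_H) : (x ^+ (q ^ i)) ^+ (q ^ j) = x ^+ (q ^ (i + j)%R).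
Proof. by rewrite -exprM -expnD ordD_val -frob_red. Qed.

Lemma frob0 k : (0 : K) ^+ (q ^ k) = 0.
Proof. by rewrite expr0n expn_eq0 (negbTE (lt0n_neq0 q_gt0)). Qed.

Lemma frob1 k : (1 : K) ^+ (q ^ k) = 1.
Proof. by rewrite expr1n. Qed.

Lemma frob_sum (I : Type) (r : seq I) (P : pred I) (F : I -> K) k :
  (\sum_(i <- r | P i) F i) ^+ (q ^ k) = \sum_(i <- r | P i) F i ^+ (q ^ k).
Proof.
exact: (big_morph (fun x => x ^+ (q ^ k)) (frobD k) (frob0 k)).
Qed.

Lemma frob_inj k (x y : K) : x ^+ (q ^ k) = y ^+ (q ^ k) -> x = y.
Proof.
move=> E; apply/eqP; rewrite -subr_eq0; apply/eqP.
have : (x - y) ^+ (q ^ k) = 0.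
  have h : (x - y) ^+ (q ^ k) + y ^+ (q ^ k) = 0 + y ^+ (q ^ k) by rewrite -frobD subrK E add0r.
  exact: (addIr _ h).
move/eqP; rewrite expf_eq0 => /andP[_ /eqP //].
Qed.


Lemma lin_add s x y : lin s (x + y) = lin s x + lin s y.
Proof. by rewrite /lin -big_split /=; apply: eq_bigr => l _; rewrite frobD mulrDr. Qed.

Lemma lin_argM s b y : lin s (b * y) = lin (fun l => s l * b ^+ (q ^ l)) y.
Proof. by apply: eq_bigr => l _; rewrite exprMn mulrA. Qed.

Lemma lin_scale s a y : a * lin s y = lin (fun l => a * s l) y.
Proof. by rewrite /lin mulr_sumr; apply: eq_bigr => l _; rewrite mulrA. Qed.

Lemma lin0 s : lin s 0 = 0.
Proof. by rewrite /lin big1 // => l _; rewrite frob0 mulr0. Qed.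

Definition comp (s t : 'I_H -> K) (l : 'I_H) : K :=
  \sum_(i < H) s i * t (l - i) ^+ (q ^ i).

Lemma lin_comp s t y : lin s (lin t y) = lin (comp s t) y.
Proof.
rewrite /lin /comp.
under eq_bigr => i _ do rewrite frob_sum mulr_sumr.
under [RHS]eq_bigr => l _ do rewrite mulr_suml.
rewrite [RHS]exchange_big /=.
apply: eq_bigr => i _.
rewrite [RHS](reindex_inj (addIr i)) /=.
apply: eq_bigr => k _.
by rewrite addrK exprMn frob_ord mulrA.
Qed.

Definition delta0 (l : 'I_H) : K := (l == 0)%:R.

Lemma lin_id y : lin delta0 y = y.
Proof.
rewrite /lin (bigD1 ord0) //= big1 ?addr0 ?mul1r ?expn0 ?expr1 //.
by move=> i hi; rewrite /delta0 (negbTE hi) mul0r.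
Qed.

Definition linP (s : 'I_H -> K) : {poly K} := \sum_(l < H) s l *: 'X^(q ^ l).

Lemma linP_horner s x : (linP s).[x] = lin s x.
Proof.
rewrite /linP horner_sum; apply: eq_bigr => l _.
by rewrite hornerZ hornerXn.
Qed.

Lemma linP_coef s (l : 'I_H) : (linP s)`_(q ^ l) = s l.
Proof.
rewrite /linP coef_sumMXn (big_pred1 l) // => i /=.
by rewrite eqn_exp2l.
Qed.

Lemma linP_size s : (size (linP s) <= (q ^ H.-1).+1)%N.
Proof.
apply/leq_sizeP => j hj; rewrite /linP coef_sumMXn big_pred0 // => i /=.
apply/negbTE; apply: contraTneq hj => <-; rewrite -ltnNge ltnS leq_exp2l //.
by rewrite -ltnS; case: i.
Qed.

Lemma lin_roots s (rs : seq K) : uniq rs -> (q ^ H.-1 < size rs)%N ->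
  all (fun x => lin s x == 0) rs -> forall l, s l = 0.
Proof.
move=> urs hs hall l.
have P0 : linP s = 0.
  apply: contraTeq hs => nz; rewrite -leqNgt -ltnS.
  apply: leq_trans (linP_size s).
  apply: max_poly_roots nz _ urs.
  by apply/allP => x /(allP hall) /eqP hx; rewrite /root linP_horner hx.
by rewrite -linP_coef P0 coef0.
Qed.

Lemma lin_ext s t : lin s =1 lin t -> s =1 t.
Proof.
move=> E l; apply/eqP; rewrite -subr_eq0; apply/eqP.
apply: (@lin_roots (fun l => s l - t l) (enum K) (enum_uniq _)) => //.
  by rewrite -cardE cardK ltn_exp2l.
apply/allP => x _; rewrite /lin.
under eq_bigr => i _ do rewrite mulrBl.
by rewrite sumrB -/(lin s x) -/(lin t x) E subrr.
Qed.


Lemma iter_lin s N : exists u, iter N (lin s) =1 lin u.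
Proof.
elim: N => [|N [u Hu]]; first by exists delta0 => x; rewrite lin_id.
by exists (comp s u) => x; rewrite iterS Hu lin_comp.
Qed.

Lemma lin_inv s sinv : cancel (lin s) sinv -> cancel sinv (lin s) ->
  exists u, sinv =1 lin u.
Proof.
move=> c1 c2.
pose sg : {perm K} := perm (can_inj c1).
have [u Hu] := iter_lin s (#[sg]%g).-1.
exists u => x.
have E : iter (#[sg]%g) (lin s) x = x.
  have -> : iter (#[sg]%g) (lin s) x = iter (#[sg]%g) sg x.
    by apply: eq_iter => z; rewrite permE.
  by rewrite -permX (fingroup.expg_order sg) perm1.
rewrite -Hu -{1}E -(prednK (fingroup.order_gt0 sg)) iterS.
by rewrite c1.
Qed.


Lemma derive (f g : 'I_H -> K) finv ginv (a b c : nat -> K) m :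
  cancel (lin f) finv -> cancel finv (lin f) ->
  cancel (lin g) ginv -> cancel ginv (lin g) ->
  (forall j, (j < m)%N -> forall x, a j * lin f (b j * finv x) = lin g (c j * ginv x)) ->
  exists t : 'I_H -> K,
   [/\ exists k, t k != 0,
       exists u, comp u t =1 delta0
     & forall j, (j < m)%N -> forall l,
        a j * (f l * b j ^+ (q ^ l)) = \sum_(i < H) g i * (c j * t (l - i)) ^+ (q ^ i)].
Proof.
move=> cf1 cf2 cg1 cg2 hP.
have [ga Hga] := lin_inv cg1 cg2.
pose t := comp ga f.
have HT y : ginv (lin f y) = lin t y by rewrite Hga lin_comp.
exists t; split.
- case: (pickP (fun k => t k != 0)) => [k hk | hn]; first by exists k.
  have h0 : lin t 1 = 0.
    by rewrite /lin big1 // => i _; move: (hn i) => /negbFE/eqP ->; rewrite mul0r.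
  have : ginv (lin f 1) = ginv (lin f 0) by rewrite !HT h0 lin0.
  by move/(can_inj cg2)/(can_inj cf1)/eqP; rewrite oner_eq0.
- have c1 : cancel (lin t) (fun x => finv (lin g x)).
    by move=> y; rewrite -HT cg2 cf1.
  have c2 : cancel (fun x => finv (lin g x)) (lin t).
    by move=> x; rewrite -HT cf2 cg1.
  have [u Hu] := lin_inv c1 c2.
  exists u; apply: lin_ext => y.
  by rewrite -lin_comp -Hu c1 lin_id.
- move=> j hj.
  apply: lin_ext => y.
  have := hP j hj (lin f y); rewrite cf1 HT.
  rewrite lin_argM lin_scale => ->.
  by rewrite lin_scale lin_comp.
Qed.


Lemma uniq_map_iota (c : nat -> K) m :
  (forall i j, (i < m)%N -> (j < m)%N -> i <> j -> c i != c j) ->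
  uniq (map c (iota 0 m)).
Proof.
move=> hc; rewrite map_inj_in_uniq ?iota_uniq // => i j.
rewrite !mem_iota /= !add0n => hi hj e.
case: (eqVneq i j) => // ne; exfalso.
by move: (hc i j hi hj (elimN eqP ne)); rewrite e eqxx.
Qed.

Lemma supp_le (f g : 'I_H -> K) (a b c : nat -> K) (t : 'I_H -> K) m :
  (q ^ H.-1 < m)%N ->
  (forall i j, (i < m)%N -> (j < m)%N -> i <> j -> c i != c j) ->
  (exists k, t k != 0) ->
  (forall j, (j < m)%N -> forall l,
     a j * (f l * b j ^+ (q ^ l)) = \sum_(i < H) g i * (c j * t (l - i)) ^+ (q ^ i)) ->
  (#|[set i | g i != 0%R]| <= #|[set i | f i != 0%R]|)%N.
Proof.
move=> hm hc [k hk] hE.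
rewrite -(card_imset _ (addIr k)).
apply: subset_leq_card; apply/subsetP => _ /imsetP [i hi ->].
rewrite inE in hi; rewrite inE; apply/negP => /eqP fz.
have := @lin_roots (fun i' => g i' * t (i + k - i') ^+ (q ^ i')) _ (uniq_map_iota hc).
rewrite size_map size_iota => /(_ hm).
have -> : all (fun x => lin (fun i' => g i' * t (i + k - i') ^+ (q ^ i')) x == 0)
           (map c (iota 0 m)).
  apply/allP => _ /mapP [j hj ->]; rewrite mem_iota add0n in hj.
  apply/eqP; transitivity (a j * (f (i + k) * b j ^+ (q ^ (i + k)%R))); last first.
    by rewrite fz mul0r mulr0.
  rewrite hE //; apply: eq_bigr => i' _.
  by rewrite exprMn [c j ^+ _ * _]mulrC mulrA.
move=> /(_ isT i) /eqP; rewrite mulf_eq0 (negbTE hi) /= addrAC subrr add0r.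
by rewrite expf_eq0 (negbTE hk) andbF.
Qed.


Definition Dk (s : 'I_H -> K) : 'M[K]_H := \matrix_(i, j) s (j - i) ^+ (q ^ i).

Lemma Dk_comp s t : Dk (comp s t) = Dk s *m Dk t.
Proof.
apply/matrixP => i j; rewrite !mxE /comp frob_sum.
rewrite [RHS](reindex_inj (addIr i)) /=.
apply: eq_bigr => k _; rewrite !mxE exprMn frob_ord addrK.
by rewrite [(k + i)%R]addrC opprD addrA.
Qed.

Lemma Dk_delta : Dk delta0 = 1%:M.
Proof.
apply/matrixP => i j; rewrite !mxE /delta0 subr_eq0 eq_sym.
by case: (i == j); [exact: frob1 | exact: frob0].
Qed.

Lemma Dk_unit t u : comp u t =1 delta0 -> Dk t \in unitmx.
Proof.
move=> hu; have : Dk u *m Dk t = 1%:M.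
  rewrite -Dk_comp -Dk_delta; apply/matrixP => i j; rewrite !mxE hu //.
by case/mulmx1_unit.
Qed.


Lemma frobq (x y : K) : (x + y) ^+ q = x ^+ q + y ^+ q.
Proof. by have := frobD 1 x y; rewrite expn1. Qed.

Lemma frobq_sum (I : Type) (r : seq I) (P : pred I) (F : I -> K) :
  (\sum_(i <- r | P i) F i) ^+ q = \sum_(i <- r | P i) F i ^+ q.
Proof. by have := frob_sum r P F 1; rewrite expn1. Qed.

Lemma frob_ord1 (x : K) (i : 'I_H) : (x ^+ (q ^ i)) ^+ q = x ^+ (q ^ (i + 1)%R).
Proof. by rewrite -frob_ord /= expn1. Qed.

Lemma rel (f g t : 'I_H -> K) (a b c : K) :
  (forall l, a * (f l * b ^+ (q ^ l)) = \sum_(i < H) g i * (c * t (l - i)) ^+ (q ^ i)) ->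
  forall n0, \sum_(i < H) c ^+ (q ^ i) * (t (n0 - i) ^+ (q ^ i) *
      (a ^+ q.-1 * (f (n0 - 1) ^+ q * g i) - f n0 * g (i - 1) ^+ q)) = 0.
Proof.
move=> E n0; set l := (n0 - 1)%R.
have hn : n0 = (l + 1)%R by rewrite subrK.
have key : a ^+ q.-1 * f l ^+ q * (\sum_(i < H) g i * (c * t (n0 - i)) ^+ (q ^ i))
         = f n0 * (\sum_(i < H) g i * (c * t (l - i)) ^+ (q ^ i)) ^+ q.
  rewrite -(E n0) -(E l).
  have hb : (b ^+ (q ^ l)) ^+ q = b ^+ (q ^ n0) by rewrite frob_ord1 -hn.
  have ha : a ^+ q = a ^+ q.-1 * a by rewrite -exprSr (prednK q_gt0).
  rewrite !exprMn hb ha.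
  ring.
rewrite frobq_sum !mulr_sumr in key.
have e1 : \sum_(i < H) c ^+ (q ^ i) * (t (n0 - i) ^+ (q ^ i) * (a ^+ q.-1 * (f l ^+ q * g i)))
        = \sum_(i < H) a ^+ q.-1 * f l ^+ q * (g i * (c * t (n0 - i)) ^+ (q ^ i)).
  by apply: eq_bigr => i _; rewrite exprMn; ring.
have e2 : \sum_(i < H) c ^+ (q ^ i) * (t (n0 - i) ^+ (q ^ i) * (f n0 * g (i - 1) ^+ q))
        = \sum_(i < H) f n0 * (g i * (c * t (l - i)) ^+ (q ^ i)) ^+ q.
  rewrite [RHS](reindex_inj (addIr (-1))).
  apply: eq_bigr => i _.
  rewrite !exprMn frob_ord1 frob_ord1 subrK.
  have -> : (l - (i - 1))%R = (n0 - i)%R by rewrite hn opprB addrA.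
  ring.
under eq_bigr => i _ do rewrite mulrBr mulrBr.
by rewrite sumrB e1 e2 key subrr.
Qed.


Lemma count_fibers (m e : nat) (a : nat -> K) (L : {set K}) :
  (0 < e)%N ->
  (forall i j, (i < m)%N -> (j < m)%N -> i <> j -> a i != a j) ->
  (forall j, (j < m)%N -> a j ^+ e \in L) -> (m <= #|L| * e)%N.
Proof.
move=> he ha hL.
have -> : m = (\sum_(j : 'I_m) 1)%N by rewrite sum1_card card_ord.
rewrite (partition_big (fun j : 'I_m => a j ^+ e) (mem L)); last first.
  by move=> j _; apply: hL.
rewrite -sum_nat_const; apply: leq_sum => x hx.
rewrite sum1dep_card.
set S := [set x0 | _ & _].
have hu : uniq (map (fun j : 'I_m => a j) (enum S)).
  rewrite map_inj_in_uniq ?enum_uniq // => i j _ _ e1.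
  apply: val_inj; case: (eqVneq (val i) (val j)) => // ne; exfalso.
  by move: (ha i j (ltn_ord i) (ltn_ord j) (elimN eqP ne)); rewrite e1 eqxx.
have := max_poly_roots (p := 'X^e - x%:P) _ _ hu.
rewrite size_map -cardE size_XnsubC // ltnS; apply.
  by rewrite -size_poly_eq0 size_XnsubC.
apply/allP => _ /mapP [j hj ->]; rewrite mem_enum /S inE /= in hj.
move/eqP: hj => hj.
by rewrite /root !hornerE hj subrr.
Qed.


Lemma full_bound (f g t u : 'I_H -> K) (a b c : nat -> K) m :
  (forall l, f l != 0) -> (forall l, g l != 0) -> comp u t =1 delta0 ->
  (forall j, (j < m)%N -> c j != 0) ->
  (forall i j, (i < m)%N -> (j < m)%N -> i <> j -> a i != a j) ->
  (forall j, (j < m)%N -> forall l,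
     a j * (f l * b j ^+ (q ^ l)) = \sum_(i < H) g i * (c j * t (l - i)) ^+ (q ^ i)) ->
  (m <= H * q.-1)%N.
Proof.
move=> hf hg hu hc ha hE.
pose P1 : 'M[K]_H := \matrix_(i, n0) (t (n0 - i) ^+ (q ^ i) * (f (n0 - 1) ^+ q * g i)).
pose P2 : 'M[K]_H := \matrix_(i, n0) (t (n0 - i) ^+ (q ^ i) * (f n0 * g (i - 1) ^+ q)).
have P1u : P1 \in unitmx.
  have -> : P1 = diag_mx (\row_i g i) *m Dk t *m diag_mx (\row_n0 f (n0 - 1) ^+ q).
    apply/matrixP => i j; rewrite mul_mx_diag mul_diag_mx !mxE; ring.
  rewrite !unitmx_mul (Dk_unit hu) andbT !unitmxE !det_diag !unitfE.
  apply/andP; split; apply/prodf_neq0 => i _; rewrite mxE //.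
  by rewrite expf_neq0.
pose A := invmx P1 *m P2.
have eig j : (j < m)%N -> root (char_poly A) (a j ^+ q.-1).
  move=> hj; rewrite -eigenvalue_root_char.
  pose z : 'rV[K]_H := \row_i (c j) ^+ (q ^ i).
  have hz : z *m (a j ^+ q.-1 *: P1 - P2) = 0.
    apply/matrixP => i0 n0; rewrite !mxE -[X in _ = X](rel (hE j hj) n0).
    apply: eq_bigr => i _; rewrite !mxE; ring.
  have hz2 : a j ^+ q.-1 *: (z *m P1) = z *m P2.
    by apply/eqP; rewrite -subr_eq0 scalemxAr -mulmxBr hz.
  apply/eigenvalueP; exists (z *m P1).
    by rewrite /A mulmxA mulmxK.
  apply/eqP => w0.
  have : z = 0 by rewrite -(mulmxK P1u z) w0 mul0mx.
  move/matrixP => /(_ 0 0); rewrite !mxE expn0 expr1 => /eqP.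
  by rewrite (negbTE (hc j hj)).
pose L := [set x | root (char_poly A) x].
have hL : (#|L| <= H)%N.
  rewrite -ltnS -(size_char_poly A) cardE.
  apply: max_poly_roots; first exact: monic_neq0 (char_poly_monic A).
    by apply/allP => x; rewrite mem_enum inE.
  exact: enum_uniq.
apply: leq_trans (leq_mul hL (leqnn _)).
apply: count_fibers ha _ => [|j hj]; first by rewrite -subn1 subn_gt0.
by rewrite inE eig.
Qed.

End Lin.

Lemma zero_count (H : nat) (K : finFieldType) (s : 'I_H -> K) :
  #|[set i | s i == 0%R]| = (H - #|[set i | s i != 0%R]|)%N.
Proof.
have E := cardsC [set i | s i != 0%R]; rewrite card_ord in E; rewrite -[X in (X - _)%N]E addKn.
by apply: eq_card => i; rewrite !inE negbK.
Qed.

Unset Implicit Arguments.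

Theorem lemma5p12 (K : finFieldType) (q h m : nat)
  (fc gc : 'I_h -> K) (finv ginv : K -> K) :
  prime_power q -> #|K| = (q ^ h)%N -> (2 <= h)%N ->
  (maxn (q ^ h.-1) (h * q - 1) < m)%N ->
  cancel (linpoly q fc) finv -> cancel finv (linpoly q fc) ->
  cancel (linpoly q gc) ginv -> cancel ginv (linpoly q gc) ->
  Prop_m m (linpoly q fc) finv (linpoly q gc) ginv ->
  #|[set i : 'I_h | fc i == 0%R]| = #|[set i : 'I_h | gc i == 0%R]| /\
  (1 <= #|[set i : 'I_h | fc i == 0%R]|)%N.
Proof.
move=> [p [k [pp kp qe]]] cK h2 hm cf1 cf2 cg1 cg2 [a [b [c [hnz _ hP hd]]]].
destruct h as [|[|n]]; first by []; first by [].
set H := n.+2 in fc gc cK hm cf1 cf2 cg1 cg2 hP *.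
have q_gt1 : (1 < q)%N.
  rewrite qe; apply: (leq_trans (prime_gt1 pp)).
  by rewrite -{1}(expn1 p) leq_pexp2l // prime_gt0.
have chK : p \in [char K].
  by apply: (card_finPcharP _ pp); rewrite cK qe -expnM.
have frobD i (x y : K) : (x + y) ^+ (q ^ i) = x ^+ (q ^ i) + y ^+ (q ^ i).
  apply: exprDn_pchar; rewrite qe -expnM pnatX (pnatE _ pp) chK //.
have frobH (x : K) : x ^+ (q ^ H) = x by rewrite -cK expf_card.
have da i j : (i < m)%N -> (j < m)%N -> i <> j -> a i != a j.
  by move=> hi hj ne; case: (hd i j hi hj ne).
have db i j : (i < m)%N -> (j < m)%N -> i <> j -> b i != b j.
  by move=> hi hj ne; case: (hd i j hi hj ne).
have dc i j : (i < m)%N -> (j < m)%N -> i <> j -> c i != c j.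
  by move=> hi hj ne; case: (hd i j hi hj ne).
have cnz j : (j < m)%N -> c j != 0 by move=> hj; case: (hnz j hj).
move: hm; rewrite gtn_max => /andP[hm1 hm2].
have hid j : (j < m)%N -> forall x,
    a j * lin q fc (b j * finv x) = lin q gc (c j * ginv x).
  by move=> hj x; apply: hP.
have hid' j : (j < m)%N -> forall x,
    (a j)^-1 * lin q gc (c j * ginv x) = lin q fc (b j * finv x).
  move=> hj x; rewrite -(hid j hj) mulrA mulVf ?mul1r //.
  by case: (hnz j hj).
have [t [tnz [u hu] hE]] := derive q_gt1 frobD frobH cK cf1 cf2 cg1 cg2 hid.
have [t' [tnz' _ hE']] := derive q_gt1 frobD frobH cK cg1 cg2 cf1 cf2 hid'.
have le1 := supp_le q_gt1 hm1 dc tnz hE.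
have le2 := supp_le q_gt1 hm1 db tnz' hE'.
have eqnz : #|[set i | fc i != 0%R]| = #|[set i | gc i != 0%R]|.
  by apply/eqP; rewrite eqn_leq le1 le2.
have eqz : #|[set i | fc i == 0%R]| = #|[set i | gc i == 0%R]|.
  by rewrite !zero_count eqnz.
split => //.
rewrite lt0n; apply/negP => /eqP z0.
have allf l : fc l != 0.
  by apply/negP => /eqP fl; move: (cards0_eq z0) => /setP /(_ l); rewrite !inE fl eqxx.
have allg l : gc l != 0.
  rewrite eqz in z0.
  by apply/negP => /eqP gl; move: (cards0_eq z0) => /setP /(_ l); rewrite !inE gl eqxx.
have := full_bound q_gt1 frobD frobH allf allg hu cnz
  da hE.
apply/negP; rewrite -ltnNge.
apply: leq_trans hm2.
rewrite ltnS -subn1 mulnBr muln1 leq_sub2l //.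
Qed.
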